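(* For every $n$, $\mathrm{ex}(n,M,K_3)=\mathcal N(M,T_2(n))$ and $\mathrm{ex}(n,M',K_3)=\mathcal N(M',T_2(n))$.
   Context: $M$ is the five-vertex graph consisting of two independent edges and an isolated vertex; $M'$ is the five-vertex graph consisting of a path $P_3$ on three vertices and a disjoint edge. $T_2(n)$ is the complete bipartite graph on $n$ vertices with parts of sizes $\lfloor n/2\rfloor$ and $\lceil n/2\rceil$. $\mathcal N(H,G)$ is the number of subgraphs of $G$ isomorphic to $H$; $\mathrm{ex}(n,H,K_3)$ is the maximum of $\mathcal N(H,G)$ over triangle-free $n$-vertex graphs $G$. *)

(* Defs.v *)
From mathcomp Require Import all_boot all_order.
Set Implicit Arguments. Unset Strict Implicit. Unset Printing Implicit Defensive.

(* A simple graph on vertex set 'I_n is represented by its edge set: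
   a set of 2-element subsets of 'I_n. *)
Definition simple_graph (n : nat) (E : {set {set 'I_n}}) : bool :=
  [forall e in E, #|e| == 2].

Definition triangle_free (n : nat) (E : {set {set 'I_n}}) : bool :=
  ~~ [exists x : 'I_n, exists y : 'I_n, exists z : 'I_n,
        [&& [set x; y] \in E, [set y; z] \in E & [set x; z] \in E]].

(* A subgraph (S, F) of G = ('I_n, E): S a vertex set, F a set of edges of G.
   It is a copy of H = ('I_k, EH) if there is a bijection f : 'I_k -> S
   mapping the edge set EH exactly onto F. *)
Definition is_copy (k n : nat) (EH : {set {set 'I_k}}) (E : {set {set 'I_n}})
  (S : {set 'I_n}) (F : {set {set 'I_n}}) : bool :=
  (F \subset E) &&
  [exists f : {ffun 'I_k -> 'I_n},
     [&& injectiveb f, f @: setT == S & F == [set (f @: e) | e : {set 'I_k} in EH]]].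

Definition num_copies (k n : nat) (EH : {set {set 'I_k}}) (E : {set {set 'I_n}}) : nat :=
  #|[set p : {set 'I_n} * {set {set 'I_n}} | is_copy EH E p.1 p.2]|.

Definition ex_K3 (k n : nat) (EH : {set {set 'I_k}}) : nat :=
  \max_(E : {set {set 'I_n}} | simple_graph E && triangle_free E) num_copies EH E.

(* T_2(n): parts {i < n/2} (size floor(n/2)) and {i >= n/2} (size ceil(n/2)). *)
Definition T2 (n : nat) : {set {set 'I_n}} :=
  [set e : {set 'I_n} | [exists i : 'I_n, exists j : 'I_n,
      [&& (i < n./2)%N, (n./2 <= j)%N & e == [set i; j]]]].

(* M: two independent edges plus an isolated vertex, on 'I_5. *)
Definition M_graph : {set {set 'I_5}} :=
  [set [set (inord 0 : 'I_5); inord 1]; [set (inord 2 : 'I_5); inord 3]].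

(* M': a path P_3 plus a disjoint edge, on 'I_5. *)
Definition M'_graph : {set {set 'I_5}} :=
  [set [set (inord 0 : 'I_5); inord 1]; [set (inord 1 : 'I_5); inord 2];
       [set (inord 3 : 'I_5); inord 4]].

(* Main.v *)
Require Import Defs.
From mathcomp Require Import all_boot all_order zify fingroup perm.
Set Implicit Arguments. Unset Strict Implicit. Unset Printing Implicit Defensive.

Section Fiber.
Variables (k n : nat) (EH : {set {set 'I_k}}) (E : {set {set 'I_n}}).

Definition phi (x : {ffun 'I_k -> 'I_n}) :=
  (x @: setT, [set (x @: e) | e : {set 'I_k} in EH]).

Definition good (x : {ffun 'I_k -> 'I_n}) :=
  injectiveb x && [forall e in EH, (x @: e) \in E].

Lemma num_copiesE : num_copies EH E = #|phi @: [set x | good x]|.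
Proof.
rewrite /num_copies; apply: eq_card => -[S F]; rewrite inE /is_copy /=.
apply/idP/imsetP.
- case/andP => FsubE /existsP [f /and3P [injf /eqP fS /eqP FE]].
  exists f; last by rewrite /phi fS FE.
  rewrite inE /good injf /=; apply/forall_inP => e eEH.
  apply: (subsetP FsubE); rewrite FE; exact: imset_f.
- case=> x; rewrite inE => /andP [injx /forall_inP xE] [-> ->].
  apply/andP; split.
    by apply/subsetP => _ /imsetP [e eEH ->]; exact: xE.
  by apply/existsP; exists x; rewrite injx !eqxx.
Qed.

Definition Aut : {set {perm 'I_k}} := [set s : {perm 'I_k} | [set ((s : {perm 'I_k}) @: e) | e : {set 'I_k} in EH] == EH].

Definition comp (x : {ffun 'I_k -> 'I_n}) (s : {perm 'I_k}) : {ffun 'I_k -> 'I_n} :=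
  [ffun i => x (s i)].

Lemma imset_comp_ffun x s (A : {set 'I_k}) : comp x s @: A = x @: (s @: A).
Proof. by rewrite -imset_comp; apply: eq_imset => i; rewrite ffunE. Qed.

Lemma perm_imsetT (s : {perm 'I_k}) : s @: setT = setT.
Proof.
apply/eqP; rewrite eqEcard subsetT /= card_imset //; exact: perm_inj.
Qed.

Lemma Aut_mem s e : s \in Aut -> e \in EH -> s @: e \in EH.
Proof. by rewrite inE => /eqP {2}<- eEH; apply: imset_f. Qed.

Lemma fiberE x : good x ->
  [set y | good y && (phi y == phi x)] = [set comp x s | s in Aut].
Proof.
move=> gx; have /andP [/injectiveP injx /forall_inP xE] := gx.
apply/setP => y; rewrite inE; apply/idP/imsetP.
- case/andP => /andP [/injectiveP injy _] /eqP [yT yEH].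
  pose sig0 i := odflt i [pick j | x j == y i].
  have xs i : x (sig0 i) = y i.
    rewrite /sig0; case: pickP => [j /eqP //| none].
    have : y i \in y @: setT by apply: imset_f.
    by rewrite yT => /imsetP [j _ /esym/eqP]; rewrite none.
  have sinj : injective sig0 by move=> i j eij; apply: injy; rewrite -!xs eij.
  exists (perm sinj); last by apply/ffunP => i; rewrite ffunE permE xs.
  have ycomp : y = comp x (perm sinj) by apply/ffunP => i; rewrite ffunE permE xs.
  rewrite inE eqEcard card_imset; last exact/imset_inj/perm_inj.
  rewrite leqnn andbT; apply/subsetP => _ /imsetP [e eEH ->].
  have : y @: e \in [set (y @: e) | e : {set 'I_k} in EH] by apply: imset_f.
  rewrite yEH => /imsetP [e' e'EH].
  rewrite ycomp imset_comp_ffun => /(imset_inj injx) ->; exact: e'EH.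
- case=> s sAut ->.
  rewrite /good; apply/andP; split; first (apply/andP; split).
  + apply/injectiveP => i j; rewrite !ffunE => /injx; exact: perm_inj.
  + apply/forall_inP => e eEH; rewrite imset_comp_ffun; apply: xE.
    exact: Aut_mem.
  + rewrite /phi imset_comp_ffun perm_imsetT; apply/eqP; congr pair.
    have -> : [set comp x s @: e | e : {set 'I_k} in EH] = [set x @: e | e : {set 'I_k} in [set s @: e | e : {set 'I_k} in EH]].
      by rewrite -imset_comp; apply: eq_imset => e /=; rewrite imset_comp_ffun.
    by move: sAut; rewrite inE => /eqP ->.
Qed.

Lemma card_fiber x : good x ->
  #|[set y | good y && (phi y == phi x)]| = #|Aut|.
Proof.
move=> gx; rewrite fiberE // card_imset // => s t est.
have /andP [/injectiveP injx _] := gx.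
apply/permP => i; apply: injx; move/ffunP: est => /(_ i); by rewrite !ffunE.
Qed.

Lemma card_good : #|[set x | good x]| = #|Aut| * num_copies EH E.
Proof.
rewrite num_copiesE -sum1_card (partition_big_imset phi) /= mulnC -sum_nat_const.
apply: eq_bigr => _ /imsetP [x gx ->].
rewrite -[RHS](@card_fiber x); last by move: gx; rewrite inE.
rewrite -sum1_card; apply: eq_bigl => y; by rewrite !inE.
Qed.

Lemma Aut_gt0 : 0 < #|Aut|.
Proof.
apply/card_gt0P; exists 1%g; rewrite inE.
apply/eqP; rewrite -[RHS]imset_id; apply: eq_imset => e.
by rewrite -[RHS]imset_id; apply: eq_imset => i; rewrite perm1.
Qed.

End Fiber.

Lemma num_copies_le k n (EH : {set {set 'I_k}}) (E E' : {set {set 'I_n}}) :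
  #|[set x | good EH E x]| <= #|[set x | good EH E' x]| ->
  num_copies EH E <= num_copies EH E'.
Proof. by rewrite !card_good leq_pmul2l // Aut_gt0. Qed.

Section Five.
Variable T : finType.

Definition mk5 (a b c d w : T) : {ffun 'I_5 -> T} :=
  [ffun i : 'I_5 => nth a [:: a; b; c; d; w] i].

Definition i5 (j : nat) : 'I_5 := inord j.

Lemma mk5E a b c d w :
  [/\ mk5 a b c d w (i5 0) = a, mk5 a b c d w (i5 1) = b, mk5 a b c d w (i5 2) = c,
      mk5 a b c d w (i5 3) = d & mk5 a b c d w (i5 4) = w].
Proof. by rewrite /mk5 /i5 !ffunE !inordK. Qed.

Definition un5 (x : {ffun 'I_5 -> T}) : T * T * T * T * T :=
  (x (i5 0), x (i5 1), x (i5 2), x (i5 3), x (i5 4)).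

Definition mk5p (p : T * T * T * T * T) := mk5 p.1.1.1.1 p.1.1.1.2 p.1.1.2 p.1.2 p.2.

Lemma mk5p_bij : bijective mk5p.
Proof.
exists un5.
  by case=> [[[[a b] c] d] w]; rewrite /un5 /mk5p /=; case: (mk5E a b c d w) => -> -> -> -> ->.
move=> x; apply/ffunP => i; rewrite /mk5p /un5 /mk5 ffunE /=.
case: i => [[|[|[|[|[|j]]]]] Hj] //=; rewrite /i5;
  try (congr (x _); apply: val_inj; rewrite /= inordK //).
Qed.

Lemma sum_ffun5 (F : {ffun 'I_5 -> T} -> nat) :
  \sum_x F x = \sum_a \sum_b \sum_c \sum_d \sum_w F (mk5 a b c d w).
Proof.
rewrite !pair_big /= (reindex mk5p) /=; last by apply: onW_bij; exact: mk5p_bij.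
by [].
Qed.

Definition un5' (x : {ffun 'I_5 -> T}) : T * T * T * T * T :=
  (x (i5 3), x (i5 4), x (i5 1), x (i5 2), x (i5 0)).

Definition mk5q (p : T * T * T * T * T) := mk5 p.2 p.1.1.2 p.1.2 p.1.1.1.1 p.1.1.1.2.

Lemma mk5q_bij : bijective mk5q.
Proof.
exists un5'.
  by case=> [[[[d w] b] c] a]; rewrite /un5' /mk5q /=; case: (mk5E a b c d w) => -> -> -> -> ->.
move=> x; apply/ffunP => i; rewrite /mk5q /un5' /mk5 ffunE /=.
case: i => [[|[|[|[|[|j]]]]] Hj] //=; rewrite /i5;
  try (congr (x _); apply: val_inj; rewrite /= inordK //).
Qed.

Lemma sum_ffun5' (F : {ffun 'I_5 -> T} -> nat) :
  \sum_x F x = \sum_d \sum_w \sum_b \sum_c \sum_a F (mk5 a b c d w).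
Proof.
rewrite !pair_big /= (reindex mk5q) /=; last by apply: onW_bij; exact: mk5q_bij.
by [].
Qed.

End Five.

Lemma imset_set2 (aT rT : finType) (f : aT -> rT) a b : f @: [set a; b] = [set f a; f b].
Proof. by rewrite imsetU !imset_set1. Qed.

Lemma forall_set2 (T : finType) (P : pred T) A B :
  [forall e in [set A; B], P e] = P A && P B.
Proof.
apply/forall_inP/andP => [H|[HA HB] e]; first by split; apply: H; rewrite !inE eqxx ?orbT.
by rewrite !inE => /orP [] /eqP ->.
Qed.

Lemma forall_set3 (T : finType) (P : pred T) A B C :
  [forall e in [set A; B; C], P e] = [&& P A, P B & P C].
Proof.
apply/forall_inP/and3P => [H|[HA HB HC] e]; first by split; apply: H; rewrite !inE eqxx ?orbT.
by rewrite !inE => /orP [/orP [] | ] /eqP ->.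
Qed.

Lemma injectiveb_mk5 (T : finType) (a b c d w : T) :
  injectiveb (mk5 a b c d w) = uniq [:: a; b; c; d; w].
Proof.
rewrite /injectiveb /dinjectiveb.
have -> : [seq mk5 a b c d w i | i <- enum 'I_5] =
          [seq nth a [:: a; b; c; d; w] i | i <- [seq val i | i <- enum 'I_5]].
  by rewrite -map_comp; apply: eq_map => i; rewrite ffunE.
by rewrite val_enum_ord.
Qed.

Definition adjE n (E : {set {set 'I_n}}) (a b : 'I_n) := [set a; b] \in E.

Lemma good_M n (E : {set {set 'I_n}}) a b c d w :
  good M_graph E (mk5 a b c d w) = uniq [:: a; b; c; d; w] && (adjE E a b && adjE E c d).
Proof.
rewrite /good injectiveb_mk5 /M_graph forall_set2 !imset_set2.
by case: (mk5E a b c d w); rewrite /i5 => -> -> -> -> _.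
Qed.

Lemma good_M' n (E : {set {set 'I_n}}) a b c d w :
  good M'_graph E (mk5 a b c d w) =
  uniq [:: a; b; c; d; w] && [&& adjE E a b, adjE E b c & adjE E d w].
Proof.
rewrite /good injectiveb_mk5 /M'_graph forall_set3 !imset_set2.
by case: (mk5E a b c d w); rewrite /i5 => -> -> -> -> ->.
Qed.

Lemma card_good_M n (E : {set {set 'I_n}}) :
  #|[set x | good M_graph E x]| =
  \sum_a \sum_b \sum_c \sum_d \sum_w
     (uniq [:: a; b; c; d; w] && (adjE E a b && adjE E c d) : nat).
Proof.
rewrite -sum1_card big_mkcond /= sum_ffun5.
do 5! (apply: eq_bigr => ? _); by rewrite inE good_M.
Qed.

Lemma card_good_M' n (E : {set {set 'I_n}}) :
  #|[set x | good M'_graph E x]| =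
  \sum_d \sum_w \sum_b \sum_c \sum_a
     (uniq [:: a; b; c; d; w] && [&& adjE E a b, adjE E b c & adjE E d w] : nat).
Proof.
rewrite -sum1_card big_mkcond /= sum_ffun5'.
do 5! (apply: eq_bigr => ? _); by rewrite inE good_M'.
Qed.

Lemma sumb_card (T : finType) (P : pred T) : \sum_x (P x : nat) = #|P|.
Proof. rewrite -sum1_card [RHS]big_mkcond /=; apply: eq_bigr => x _; by rewrite unfold_in; case: (P x). Qed.

Lemma cauchy_sum (T : finType) (W : {pred T}) (f : T -> nat) :
  (\sum_(c in W) f c) ^ 2 <= #|W| * \sum_(c in W) f c ^ 2.
Proof.
set Q := \sum_(c in W) f c ^ 2.
have e1 : (\sum_(c in W) f c) ^ 2 = \sum_(c in W) \sum_(x in W) f c * f x.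
  by rewrite expnS expn1 big_distrl /=; apply: eq_bigr => c _; rewrite big_distrr.
have e2 : \sum_(c in W) \sum_(x in W) (f c ^ 2 + f x ^ 2) = 2 * (#|W| * Q).
  rewrite mul2n -addnn.
  transitivity (\sum_(c in W) (#|W| * f c ^ 2 + Q)).
    apply: eq_bigr => c _; rewrite big_split /= sum_nat_const; done.
  by rewrite big_split /= sum_nat_const -big_distrr.
rewrite -(leq_pmul2l (isT : 0 < 2)) -e2 e1 big_distrr /=; apply: leq_sum => c _.
rewrite big_distrr /=; apply: leq_sum => x _.
exact: nat_Cauchy.
Qed.

Section Core.
Variables (T : finType) (adj : rel T).
Hypothesis adj_sym : forall a b, adj a b = adj b a.
Hypothesis adj_irr : forall a, adj a a = false.
Hypothesis tf : forall a b c, adj a b -> adj b c -> adj a c -> False.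

Definition deg (W : {set T}) c := #|[set x in W | adj c x]|.
Definition arcs (W : {set T}) := \sum_(c in W) deg W c.

Lemma deg_sum (W : {set T}) c : deg W c = \sum_(x in W) (adj c x : nat).
Proof.
rewrite /deg -sum1_card big_mkcond /= [RHS]big_mkcond /=.
by apply: eq_bigr => x _; rewrite inE; case: (x \in W); case: (adj c x).
Qed.

Lemma deg_adj (W : {set T}) c x : c \in W -> x \in W -> adj c x -> deg W c + deg W x <= #|W|.
Proof.
move=> cW xW cx; rewrite /deg -cardsUI.
have -> : [set y in W | adj c y] :&: [set y in W | adj x y] = set0.
  apply/setP => y; rewrite !inE.
  case: (y \in W) => //=; case cy: (adj c y) => //=; case xy: (adj x y) => //=.
  by exfalso; apply: (tf cx xy cy).
rewrite cards0 addn0; apply: subset_leq_card; apply/subsetP => y.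
by rewrite !inE => /orP [] /andP [].
Qed.

Lemma mantel (W : {set T}) : 2 * arcs W <= #|W| ^ 2.
Proof.
set d := deg W.
have s1 : \sum_(c in W) \sum_(x in W) (adj c x : nat) * d c = \sum_(c in W) d c ^ 2.
  apply: eq_bigr => c _; rewrite -big_distrl /= -deg_sum; by rewrite mulnn.
have s2 : \sum_(c in W) \sum_(x in W) (adj c x : nat) * d x = \sum_(c in W) d c ^ 2.
  rewrite exchange_big /=; apply: eq_bigr => x _.
  rewrite -big_distrl /= -mulnn; congr (_ * _).
  by rewrite /d deg_sum; apply: eq_bigr => c _; rewrite adj_sym.
have key : 2 * \sum_(c in W) d c ^ 2 <= #|W| * arcs W.
  have -> : 2 * \sum_(c in W) d c ^ 2 =
            \sum_(c in W) \sum_(x in W) ((adj c x : nat) * d c + (adj c x : nat) * d x).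
    rewrite mul2n -addnn -{1}s1 -s2 -big_split /=.
    by apply: eq_bigr => c _; rewrite big_split.
  rewrite /arcs big_distrr /=; apply: leq_sum => c cW.
  rewrite /d deg_sum big_distrr /=; apply: leq_sum => x xW.
  case cx: (adj c x); last by rewrite !mul0n muln0.
  by rewrite !mul1n muln1 -deg_sum; apply: deg_adj.
have cs := cauchy_sum (mem W) d.
have : 2 * (arcs W * arcs W) <= #|W| ^ 2 * arcs W.
  rewrite -mulnn in cs.
  apply: leq_trans (_ : #|W| * (2 * \sum_(c in W) d c ^ 2) <= _).
    by rewrite [X in _ <= X]mulnCA leq_mul2l; apply/orP; right; exact: cs.
  by rewrite -mulnn -mulnA leq_mul2l key orbT.
case: (posnP (arcs W)) => [->|pos]; first by rewrite muln0.
by rewrite mulnA leq_mul2r (gtn_eqF pos).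
Qed.

Definition W2 (a b : T) := ~: [set a; b].

Lemma uniq4 a b c d : a != b ->
  (uniq [:: a; b; c; d] && adj c d) = [&& c \in W2 a b, d \in W2 a b & adj c d].
Proof.
move=> ab; case cd: (adj c d); last by rewrite !andbF.
have cd' : c != d by apply: contraTneq cd => ->; rewrite adj_irr.
rewrite /W2 /= !inE (negbTE ab) (negbTE cd') ![c == _]eq_sym ![d == _]eq_sym.
by case: (a == c); case: (a == d); case: (b == c); case: (b == d).
Qed.

Lemma arcs_sum (W : {set T}) :
  arcs W = \sum_c \sum_d ([&& c \in W, d \in W & adj c d] : nat).
Proof.
rewrite /arcs big_mkcond /=; apply: eq_bigr => c _; case cW: (c \in W) => /=.
  rewrite deg_sum big_mkcond /=; apply: eq_bigr => d _; by case: (d \in W).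
by rewrite big1.
Qed.

Lemma card_notin (s : seq T) : uniq s -> \sum_w (w \notin s : nat) = #|T| - size s.
Proof.
move/card_uniqP => <-; rewrite sumb_card -(cardC (mem s)) addKn.
by apply: eq_card => w; rewrite !inE.
Qed.

Lemma uniq5 (a b c d w : T) :
  uniq [:: a; b; c; d; w] = (w \notin [:: a; b; c; d]) && uniq [:: a; b; c; d].
Proof. exact: (rcons_uniq [:: a; b; c; d] w). Qed.

Definition CM := \sum_a \sum_b \sum_c \sum_d \sum_w
     (uniq [:: a; b; c; d; w] && (adj a b && adj c d) : nat).

Lemma CM_eq : CM = (#|T| - 4) * \sum_a \sum_b (adj a b : nat) * arcs (W2 a b).
Proof.
rewrite /CM big_distrr /=; apply: eq_bigr => a _; rewrite big_distrr /=; apply: eq_bigr => b _.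
case ab: (adj a b); last first.
  rewrite mul0n muln0; apply: big1 => c _; apply: big1 => d _; apply: big1 => w _.
  by rewrite andbF.
have ab' : a != b by apply: contraTneq ab => ->; rewrite adj_irr.
rewrite mul1n arcs_sum big_distrr /=; apply: eq_bigr => c _.
rewrite big_distrr /=; apply: eq_bigr => d _.
rewrite -uniq4 //.
transitivity (\sum_w ((w \notin [:: a; b; c; d]) && (uniq [:: a; b; c; d] && adj c d) : nat)).
  apply: eq_bigr => w _.
  congr (nat_of_bool _); change (uniq [:: a; b; c; d; w] && adj c d = (w \notin [:: a; b; c; d]) && (uniq [:: a; b; c; d] && adj c d)).
  by rewrite uniq5 -andbA.
case U: (uniq [:: a; b; c; d] && adj c d); last first.
  by rewrite muln0; apply: big1 => w _; rewrite andbF.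
rewrite muln1; under eq_bigr => w _ do rewrite andbT.
by rewrite card_notin //; case/andP: U.
Qed.

Definition g b c d w := #|[set a | (a \notin [:: b; c; d; w]) && adj a b]|.

Definition P3 d w b c := ([&& b \in W2 d w, c \in W2 d w & adj b c] : nat).

Definition CM' := \sum_d \sum_w \sum_b \sum_c \sum_a
     (uniq [:: a; b; c; d; w] && [&& adj a b, adj b c & adj d w] : nat).

Lemma uniq_rot4 (b c d w : T) : uniq [:: b; c; d; w] = uniq [:: d; w; b; c].
Proof. by rewrite -(rot_uniq 2 [:: b; c; d; w]). Qed.

Lemma CM'_eq : CM' = \sum_d \sum_w (adj d w : nat) *
                      \sum_b \sum_c P3 d w b c * g b c d w.
Proof.
rewrite /CM'; apply: eq_bigr => d _; apply: eq_bigr => w _.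
case dw: (adj d w); last first.
  rewrite mul0n; apply: big1 => b _; apply: big1 => c _; apply: big1 => a _.
  by rewrite !andbF.
have dw' : d != w by apply: contraTneq dw => ->; rewrite adj_irr.
rewrite mul1n; apply: eq_bigr => b _; apply: eq_bigr => c _.
under eq_bigr => a _ do rewrite cons_uniq andbT.
transitivity (\sum_a (((a \notin [:: b; c; d; w]) && adj a b) &&
                        (uniq [:: b; c; d; w] && adj b c) : nat)).
  apply: eq_bigr => a _.
  by case: (a \notin _); case: (uniq _); case: (adj a b); case: (adj b c).
rewrite uniq_rot4 uniq4 // /P3.
case: [&& _, _ & _]; last by rewrite mul0n; apply: big1 => a _; rewrite andbF.
rewrite mul1n; under eq_bigr => a _ do rewrite andbT.
rewrite (sumb_card (fun a => (a \notin [:: b; c; d; w]) && adj a b)) /g. by apply: eq_card => a; rewrite inE unfold_in.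
Qed.

Lemma g_sum d w b c : adj d w -> P3 d w b c = 1 ->
  g b c d w + g c b d w <= #|T| - 4 /\
  ((forall a b c, adj b c -> a != b -> a != c -> adj a b || adj a c) ->
     g b c d w + g c b d w = #|T| - 4).
Proof.
move=> dw; rewrite /P3; case Pb: [&& _, _ & _] => // _.
have dw' : d != w by apply: contraTneq dw => ->; rewrite adj_irr.
have /andP [us bc] : uniq [:: b; c; d; w] && adj b c by rewrite uniq_rot4 uniq4.
have bc' : b != c by apply: contraTneq bc => ->; rewrite adj_irr.
set s := [:: b; c; d; w].
set A := [set a | (a \notin s) && adj a b].
set B := [set a | (a \notin [:: c; b; d; w]) && adj a c].
have eA : g b c d w = #|A| by [].
have eB : g c b d w = #|B| by [].
have dis : A :&: B = set0.
  apply/setP => a; rewrite !inE; case ab: (adj a b); case ac: (adj a c); rewrite ?andbF //.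
  by exfalso; apply: (tf ab bc ac).
have sub : A :|: B \subset [set a | a \notin s].
  apply/subsetP => a; rewrite !inE => /orP [] /andP [] //.
  by case: (a == b); case: (a == c).
have cs : #|[set a | a \notin s]| = #|T| - 4.
  by rewrite -(card_notin us) sumb_card; apply: eq_card => a; rewrite inE.
rewrite eA eB -cardsUI dis cards0 addn0 -cs; split; first exact: subset_leq_card.
move=> full; suff -> : A :|: B = [set a | a \notin s] by []; apply/eqP; rewrite eqEsubset sub /=.
apply/subsetP => a; rewrite !inE => ns.
have ab : a != b by apply: contraNneq ns => ->; rewrite eqxx.
have ac : a != c by apply: contraNneq ns => ->; rewrite eqxx orbT.
have ns' : ~~ [|| a == c, a == b, a == d | a == w].
  by move: ns; case: (a == b); case: (a == c).
rewrite ns ns' /=; exact: full.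
Qed.

Lemma P3_sym d w b c : P3 d w b c = P3 d w c b.
Proof. by rewrite /P3 adj_sym; case: (b \in _); case: (c \in _). Qed.

Lemma double_inner d w :
  2 * (\sum_b \sum_c P3 d w b c * g b c d w) =
  \sum_b \sum_c P3 d w b c * (g b c d w + g c b d w).
Proof.
rewrite mul2n -addnn; symmetry.
under eq_bigr => b _ do under eq_bigr => c _ do rewrite mulnDr.
under eq_bigr => b _ do rewrite big_split /=.
rewrite big_split /=; congr (_ + _).
rewrite exchange_big /=; apply: eq_bigr => b _; apply: eq_bigr => c _.
by rewrite P3_sym.
Qed.

Lemma CM'_le : 2 * CM' <= CM.
Proof.
rewrite CM_eq CM'_eq big_distrr [X in _ <= X]big_distrr /=; apply: leq_sum => d _.
rewrite big_distrr [X in _ <= X]big_distrr /=; apply: leq_sum => w _.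
case dw: (adj d w); last by rewrite !mul0n muln0.
rewrite !mul1n double_inner arcs_sum big_distrr /=; apply: leq_sum => b _.
rewrite big_distrr /=; apply: leq_sum => c _.
rewrite -/(W2 d w) -/(P3 d w b c).
case P: (P3 d w b c) => [|[|m]]; first by rewrite !mul0n muln0.
  by rewrite mul1n muln1; case: (g_sum dw P).
by move: P; rewrite /P3; case: [&& _, _ & _].
Qed.

Lemma CM'_full (full : forall a b c, adj b c -> a != b -> a != c -> adj a b || adj a c) :
  2 * CM' = CM.
Proof.
rewrite CM_eq CM'_eq big_distrr [RHS]big_distrr /=; apply: eq_bigr => d _.
rewrite big_distrr [RHS]big_distrr /=; apply: eq_bigr => w _.
case dw: (adj d w); last by rewrite !mul0n !muln0.
rewrite !mul1n double_inner arcs_sum big_distrr /=; apply: eq_bigr => b _.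
rewrite big_distrr /=; apply: eq_bigr => c _.
rewrite -/(W2 d w) -/(P3 d w b c).
case P: (P3 d w b c) => [|[|m]]; first by rewrite !mul0n muln0.
  by rewrite mul1n muln1; case: (g_sum dw P) => _ ->.
by move: P; rewrite /P3; case: [&& _, _ & _].
Qed.

End Core.

Definition Bn m := 2 * (m./2) * (m - m./2).

Lemma B_bound x m : 2 * x <= m ^ 2 -> x <= Bn m.
Proof.
rewrite /Bn; move: (odd_double_half m); set h := m./2; case: (odd m) => /= e; rewrite -e -mul2n; nia.
Qed.

Section Upper.
Variables (T : finType) (adj : rel T).
Hypothesis adj_sym : forall a b, adj a b = adj b a.
Hypothesis adj_irr : forall a, adj a a = false.
Hypothesis tf : forall a b c, adj a b -> adj b c -> adj a c -> False.

Lemma CM_upper : CM adj <= (#|T| - 4) * Bn #|T| * Bn (#|T| - 2).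
Proof.
rewrite (CM_eq adj_irr) -mulnA leq_mul2l; apply/orP; right.
apply: (@leq_trans (\sum_a \sum_b (adj a b : nat) * Bn (#|T| - 2))).
  apply: leq_sum => a _; apply: leq_sum => b _.
  case ab: (adj a b); rewrite ?mul0n // !mul1n.
  have ab' : a != b by apply: contraTneq ab => ->; rewrite adj_irr.
  apply: B_bound; have := mantel adj_sym tf (W2 a b).
  by rewrite /W2 cardsCs setCK cards2 ab'.
under eq_bigr => a _ do rewrite -big_distrl /=.
rewrite -big_distrl /= leq_mul2r; apply/orP; right.
apply: B_bound; rewrite -cardsT; apply: leq_trans (mantel adj_sym tf setT).
rewrite leq_mul2l arcs_sum; apply/orP; right.
by apply: eq_leq; apply: eq_bigr => a _; apply: eq_bigr => b _; rewrite !inE.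
Qed.

End Upper.

Lemma sum_const_cond (T : finType) (P : pred T) k :
  \sum_(x | P x) k = #|[set x | P x]| * k.
Proof. by rewrite -sum1dep_card big_distrl /=; apply: eq_bigr => x _; rewrite mul1n. Qed.

Section T2.
Variable n : nat.
Definition hA : {set 'I_n} := [set i : 'I_n | i < n./2].
Definition adj2 (a b : 'I_n) := (a \in hA) != (b \in hA).

Lemma adj2_sym a b : adj2 a b = adj2 b a.
Proof. by rewrite /adj2 eq_sym. Qed.
Lemma adj2_irr a : adj2 a a = false.
Proof. by rewrite /adj2 eqxx. Qed.
Lemma adj2_tf a b c : adj2 a b -> adj2 b c -> adj2 a c -> False.
Proof. by rewrite /adj2; case: (a \in hA); case: (b \in hA); case: (c \in hA). Qed.
Lemma adj2_full a b c : adj2 b c -> a != b -> a != c -> adj2 a b || adj2 a c.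
Proof. by rewrite /adj2; case: (a \in hA); case: (b \in hA); case: (c \in hA). Qed.

Lemma card_hA : #|hA| = n./2.
Proof.
have hn : n./2 <= n by rewrite -{2}(odd_double_half n) -addnn addnA leq_addl.
have winj : injective (widen_ord hn) by move=> i j e; apply: val_inj; exact: (congr1 val e).
rewrite -[RHS]card_ord -(card_imset _ winj).
apply: eq_card => i; rewrite inE; apply/idP/imsetP.
  by move=> ih; exists (Ordinal ih) => //; apply: val_inj.
by case=> j _ ->; rewrite /= ltn_ord.
Qed.

Lemma arcs_hA (W : {set 'I_n}) : arcs adj2 W = 2 * #|W :&: hA| * #|W :\: hA|.
Proof.
rewrite /arcs (bigID (fun c => c \in hA)) /=.
have e1 : \sum_(c in W | c \in hA) deg adj2 W c = \sum_(c in W | c \in hA) #|W :\: hA|.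
  apply: eq_bigr => c /andP [_ cA]; rewrite /deg; apply: eq_card => x.
  by rewrite /adj2 cA !inE; case: (x \in W); case: (x < n./2).
have e2 : \sum_(c in W | c \notin hA) deg adj2 W c = \sum_(c in W | c \notin hA) #|W :&: hA|.
  apply: eq_bigr => c /andP [_ cA]; rewrite /deg; apply: eq_card => x.
  by rewrite /adj2 (negbTE cA) !inE; case: (x \in W); case: (x < n./2).
rewrite e1 e2 !sum_const_cond.
have -> : #|[set x | (x \in W) && (x \in hA)]| = #|W :&: hA|.
  by apply: eq_card => x; rewrite !inE.
have -> : #|[set x | (x \in W) && (x \notin hA)]| = #|W :\: hA|.
  by apply: eq_card => x; rewrite !inE andbC.
by rewrite -mulnA mul2n -addnn [X in _ + X]mulnC.
Qed.
Lemma card_nhA : #|~: hA| = n - n./2.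
Proof. have := cardsC hA; rewrite card_ord card_hA; set h := n./2; set c := #|~: hA|; lia. Qed.

Lemma arcs_W2_aux a b : a \in hA -> b \notin hA ->
  arcs adj2 (W2 a b) = 2 * (n./2 - 1) * ((n - n./2) - 1).
Proof.
move=> aA bA; rewrite arcs_hA.
have -> : W2 a b :&: hA = hA :\ a.
  apply/setP => x; rewrite /W2 !inE; case: (x =P b) => [->|_]; last by rewrite orbF.
  by move: bA; rewrite inE => /negbTE ->; rewrite !andbF.
have -> : W2 a b :\: hA = (~: hA) :\ b.
  apply/setP => x; rewrite /W2 !inE; case: (x =P a) => [->|_]; last by rewrite /= andbC.
  by move: aA; rewrite inE => ->; rewrite /= andbF.
have := cardsD1 a hA; have := cardsD1 b (~: hA).
by rewrite card_hA card_nhA aA inE bA /= !add1n => -> ->; rewrite !subn1.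
Qed.

Lemma arcs_W2 a b : adj2 a b -> arcs adj2 (W2 a b) = 2 * (n./2 - 1) * ((n - n./2) - 1).
Proof.
rewrite /adj2; case aA: (a \in hA); case bA: (b \in hA) => //= _.
  by apply: arcs_W2_aux; rewrite ?bA.
by rewrite /W2 setUC; apply: arcs_W2_aux; rewrite ?aA.
Qed.

Lemma CM_T2 : CM adj2 = (n - 4) * Bn n * Bn (n - 2).
Proof.
rewrite (CM_eq adj2_irr) card_ord -mulnA; congr (_ * _).
transitivity (\sum_a \sum_b (adj2 a b : nat) * (2 * (n./2 - 1) * ((n - n./2) - 1))).
  apply: eq_bigr => a _; apply: eq_bigr => b _.
  by case ab: (adj2 a b); rewrite ?mul0n // arcs_W2.
under eq_bigr => a _ do rewrite -big_distrl /=.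
rewrite -big_distrl /=; congr (_ * _).
  rewrite /Bn; have := arcs_hA setT; rewrite setTI setTD card_hA card_nhA arcs_sum => <-.
  by apply: eq_bigr => a _; apply: eq_bigr => b _; rewrite !inE.
case: n => [|[|m]] //.
have -> : m.+2./2 = (m./2).+1 by []. rewrite (_ : m.+2 - 2 = m); last by lia. by congr (2 * _ * _); lia.
Qed.
End T2.

Lemma adjT2 n (a b : 'I_n) : adjE (T2 n) a b = adj2 a b.
Proof.
rewrite /adjE /T2 /adj2 !inE; apply/existsP/idP.
  case=> i /existsP [j /and3P [ih hj /eqP e]].
  have hj' : (j < n./2) = false by rewrite ltnNge hj.
  apply/negP => /eqP sab.
  have side x : x \in [set a; b] -> (x < n./2) = (a < n./2).
    by rewrite !inE => /orP [] /eqP -> //; rewrite sab.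
  have si := side i; have sj := side j.
  rewrite e !inE !eqxx ?orbT /= in si sj.
  by move: (si isT) (sj isT); rewrite ih hj' => <-.
case ha: (a < n./2); case hb: (b < n./2) => //= _.
  exists a; apply/existsP; exists b; by rewrite ha leqNgt hb /=.
exists b; apply/existsP; exists a; by rewrite hb leqNgt ha /= setUC.
Qed.

Lemma CM_ext (T : finType) (r s : rel T) : r =2 s -> CM r = CM s.
Proof.
move=> e; rewrite /CM; do 5! (apply: eq_bigr => ? _); by rewrite !e.
Qed.

Lemma CM'_ext (T : finType) (r s : rel T) : r =2 s -> CM' r = CM' s.
Proof.
move=> e; rewrite /CM'; do 5! (apply: eq_bigr => ? _); by rewrite !e.
Qed.

Section GraphE.
Variables (n : nat) (E : {set {set 'I_n}}).
Hypothesis sE : simple_graph E.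
Hypothesis tE : triangle_free E.

Lemma adjE_sym a b : adjE E a b = adjE E b a.
Proof. by rewrite /adjE setUC. Qed.

Lemma adjE_irr a : adjE E a a = false.
Proof.
apply/negP => aa; move/forall_inP: sE => /(_ _ aa).
by rewrite cards2 eqxx.
Qed.

Lemma adjE_tf a b c : adjE E a b -> adjE E b c -> adjE E a c -> False.
Proof.
move=> ab bc ac; move/negP: tE; apply.
apply/existsP; exists a; apply/existsP; exists b; apply/existsP; exists c.
by apply/and3P; split.
Qed.
End GraphE.

Lemma T2_simple n : simple_graph (T2 n).
Proof.
apply/forall_inP => e; rewrite inE => /existsP [i /existsP [j /and3P [ih hj /eqP ->]]].
have ij : i != j by apply: contraTneq ih => ->; rewrite ltnNge hj.
by rewrite cards2 ij.
Qed.

Lemma T2_tf n : triangle_free (T2 n).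
Proof.
apply/negP => /existsP [a /existsP [b /existsP [c /and3P [ab bc ac]]]].
by apply: (@adj2_tf n a b c); rewrite -adjT2.
Qed.

Lemma CM_le_T2 n (E : {set {set 'I_n}}) : simple_graph E -> triangle_free E ->
  CM (adjE E) <= CM (adjE (T2 n)).
Proof.
move=> sE tE.
rewrite (CM_ext (@adjT2 n)) CM_T2.
have := CM_upper (adjE_sym E) (adjE_irr sE) (adjE_tf tE).
by rewrite card_ord.
Qed.

Theorem mainTheorem11 (n : nat) :
  ex_K3 n M_graph = num_copies M_graph (T2 n) /\
  ex_K3 n M'_graph = num_copies M'_graph (T2 n).
Proof.
have T2ok : simple_graph (T2 n) && triangle_free (T2 n) by rewrite T2_simple T2_tf.
split; apply/eqP; rewrite eqn_leq; apply/andP; split;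
  try (by apply: (leq_bigmax_cond (F := fun E => num_copies _ E)) T2ok).
- apply/bigmax_leqP => E /andP [sE tE]; apply: num_copies_le.
  rewrite !card_good_M; exact: CM_le_T2.
- apply/bigmax_leqP => E /andP [sE tE]; apply: num_copies_le.
  rewrite !card_good_M'.
  change (CM' (adjE E) <= CM' (adjE (T2 n))).
  rewrite -(leq_pmul2l (isT : 0 < 2)).
  apply: leq_trans (CM'_le (adjE_sym E) (adjE_irr sE) (adjE_tf tE)) _.
  apply: leq_trans (CM_le_T2 sE tE) _.
  rewrite (CM_ext (@adjT2 n)) (CM'_ext (@adjT2 n)).
  by rewrite (CM'_full (@adj2_sym n) (@adj2_irr n) (@adj2_tf n) (@adj2_full n)).
Qed.
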